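(* Let $A$ and $B$ be observed binary variables. Every functional causal structure over $A,B$ whose latent variables are discrete with finitely many values (not necessarily binary) is observationally equivalent to a functional causal structure over $A,B$ all of whose latent variables are binary. Equivalently, every observational equivalence class of such functional causal structures contains one in which all latent variables are binary.
   Context: A functional causal structure over observed variables $A,B$ is a directed acyclic graph together with a specification of each observed variable as a function of its causal parents; all latent (unobserved) variables are parentless. A causal model is a functional causal structure together with a probability distribution over the values of each (independent) latent variable; each causal model induces a joint distribution $\mathbb{P}(A,B)$. By convention latent variables are nontrivial: every value of every latent variable has probability strictly between $0$ and $1$. The set of joint distributions of a functional causal structure is the set of all $\mathbb{P}(A,B)$ arising from some choice of such latent distributions. Two functional causal structures are observationally equivalent if they have the same set of joint distributions over the observed variables. *)

(* Defs.v *)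
From HB Require Import structures.
From mathcomp Require Import all_boot all_order all_algebra.
From mathcomp Require Import reals.
Unset Printing Implicit Defensive.
Import Order.TTheory GRing.Theory Num.Theory.
Local Open Scope ring_scope.

(* Causal relation between the two observed binary variables A and B
   (the DAG restricted to the observed nodes must be acyclic). *)
Inductive obs_edge := NoEdge | AtoB | BtoA.

(* Latents are parentless; paA i / paB i say whether latent i is a parent of
   A / B.  fA l b gives A from the latent values l and the value b of B; it may
   only depend on the latent parents of A, and on b only if B -> A.
   Symmetrically for fB. *)
Record fcs := FCS {
  nlat : nat;
  lcard : 'I_nlat -> nat;
  lcard_ge2 : forall i, (2 <= lcard i)%N;
  edge : obs_edge;
  paA : 'I_nlat -> bool;
  paB : 'I_nlat -> bool;
  fA : {dffun forall i : 'I_nlat, 'I_(lcard i)} -> bool -> bool;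
  fB : {dffun forall i : 'I_nlat, 'I_(lcard i)} -> bool -> bool;
  fA_local : forall (l l' : {dffun forall i : 'I_nlat, 'I_(lcard i)}) b, (forall i, paA i -> l i = l' i) -> fA l b = fA l' b;
  fB_local : forall (l l' : {dffun forall i : 'I_nlat, 'I_(lcard i)}) a, (forall i, paB i -> l i = l' i) -> fB l a = fB l' a;
  fA_obs : edge <> BtoA -> forall l b b', fA l b = fA l b';
  fB_obs : edge <> AtoB -> forall l a a', fB l a = fB l a'
}.

Definition assign (S : fcs) := {dffun forall i : 'I_(nlat S), 'I_(lcard S i)}.

Definition obs (S : fcs) (l : assign S) : bool * bool :=
  match edge S with
  | NoEdge => (fA S l false, fB S l false)
  | AtoB => let a := fA S l false in (a, fB S l a)
  | BtoA => let b := fB S l false in (fA S l b, b)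
  end.

Definition latent_dist (R : realType) (S : fcs)
    (p : forall i : 'I_(nlat S), 'I_(lcard S i) -> R) : Prop :=
  (forall i x, 0 < p i x < 1) /\ (forall i, \sum_(x : 'I_(lcard S i)) p i x = 1).

Definition joint (R : realType) (S : fcs)
    (p : forall i : 'I_(nlat S), 'I_(lcard S i) -> R) (a b : bool) : R :=
  \sum_(l : assign S) (\prod_(i < nlat S) p i (l i)) * ((obs S l == (a, b)))%:R.

Definition dists (R : realType) (S : fcs) (P : bool -> bool -> R) : Prop :=
  exists p, latent_dist R S p /\ forall a b, P a b = joint R S p a b.

Definition obs_equiv (R : realType) (S S' : fcs) : Prop :=
  forall P : bool -> bool -> R, dists R S P <-> dists R S' P.

(* Main.v *)
Require Import Defs.
From mathcomp Require Import all_boot all_order all_algebra.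
From mathcomp Require Import reals.
From mathcomp Require Import ring lra.
Import Order.TTheory GRing.Theory Num.Theory.
Local Open Scope ring_scope.

Definition allowed (c x j : nat) (b : 'I_2) : bool :=
  if (j < x)%N then val b == 0%N else if (j == x) && (x < c.-1)%N then val b == 1%N else true.

Definition dec (K c : nat) (x0 : 'I_c) (row : {ffun 'I_K -> 'I_2}) : 'I_c :=
  odflt x0 [pick x : 'I_c | [forall j : 'I_K, allowed c x j (row j)]].

Lemma bit01 (b : 'I_2) : (val b != 1%N) -> val b == 0%N.
Proof. by case: b => [[|[|]]]. Qed.

Lemma dec_exists K c (row : {ffun 'I_K -> 'I_2}) (hc : (0 < c)%N) :
  exists x : 'I_c, [forall j : 'I_K, allowed c x j (row j)].
Proof.
case: (pickP (fun j : 'I_K => (j < c.-1)%N && (val (row j) == 1%N))) => [j0 Pj0|none].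
  case: (@arg_minnP _ j0 (fun j : 'I_K => (j < c.-1)%N && (val (row j) == 1%N)) (fun j : 'I_K => nat_of_ord j) Pj0) => j /andP[jc rj] jmin.
  have jc' : (j < c)%N by apply: (leq_trans jc); rewrite leq_pred.
  exists (Ordinal jc'); apply/forallP => k; rewrite /allowed /=.
  case: ifP => kj.
    apply: bit01; apply/negP => rk.
    have := jmin k; rewrite (ltn_trans kj jc) rk => /(_ isT).
    by rewrite leqNgt kj.
  case: ifP => //= /andP[/eqP kj' _]; have -> : k = j by apply: val_inj.
  by [].
have cc : (c.-1 < c)%N by rewrite prednK.
exists (Ordinal cc); apply/forallP => k; rewrite /allowed /= ltnn andbF.
case: ifP => // kc; apply: bit01; apply/negP => rk.
by have := none k; rewrite kc rk.
Qed.

Lemma dec_uniq K c (row : {ffun 'I_K -> 'I_2}) (hcK : (c <= K)%N) (x y : 'I_c) :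
  [forall j : 'I_K, allowed c x j (row j)] -> [forall j : 'I_K, allowed c y j (row j)] -> x = y.
Proof.
wlog: x y / (x <= y)%N.
  move=> H hx hy; case: (leqP x y) => xy; first exact: H.
  by symmetry; apply: H => //; apply: ltnW.
rewrite leq_eqVlt => /orP[/eqP/val_inj //|xy] /forallP hx /forallP hy.
have yc : (y <= c.-1)%N by rewrite -ltnS prednK ?ltn_ord // (leq_ltn_trans _ (ltn_ord y)).
have xK : (x < K)%N by apply: (leq_trans (ltn_ord x)).
have := hx (Ordinal xK); have := hy (Ordinal xK).
rewrite /allowed /= xy ltnn eqxx /= (leq_trans xy yc) => /eqP ->.
by [].
Qed.

Lemma dec_spec K c x0 row (hcK : (c <= K)%N) (x : 'I_c) :
  (dec K c x0 row == x) = [forall j : 'I_K, allowed c x j (row j)].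
Proof.
rewrite /dec; case: pickP => [y Py|none] /=.
  apply/eqP/idP => [<- //|Px]; apply: (dec_uniq _ _ row hcK); [exact: Py|exact: Px].
have [z Pz] := dec_exists _ _ row (leq_ltn_trans (leq0n _) (ltn_ord x0)).
by have := none z; rewrite Pz.
Qed.

Lemma forall_natr (R : realType) (I : finType) (P : pred I) :
  ([forall j, P j]%:R : R) = \prod_j (P j)%:R.
Proof.
case: (boolP [forall j, P j]) => [/forallP H|]; first by rewrite big1 // => j _; rewrite H.
rewrite negb_forall => /existsP[j Pj].
by rewrite (bigD1 j) //= (negbTE Pj) mul0r.
Qed.

Lemma sum_dec_fact (R : realType) K c x0 (hcK : (c <= K)%N) (x : 'I_c)
   (w : 'I_K -> 'I_2 -> R) :
  \sum_(row : {ffun 'I_K -> 'I_2}) (dec K c x0 row == x)%:R * \prod_j w j (row j)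
  = \prod_(j : 'I_K) \sum_(b : 'I_2) (allowed c x j b)%:R * w j b.
Proof.
rewrite bigA_distr_bigA; apply: eq_bigr => row _.
by rewrite dec_spec // forall_natr -big_split.
Qed.

Lemma sum_rows_one (R : realType) K (w : 'I_K -> 'I_2 -> R) :
  (forall j, \sum_b w j b = 1) ->
  \sum_(row : {ffun 'I_K -> 'I_2}) \prod_j w j (row j) = 1.
Proof.
move=> H; rewrite -bigA_distr_bigA; apply: big1 => j _; exact: H.
Qed.

Lemma sum_dec_all (R : realType) K c x0 (F : {ffun 'I_K -> 'I_2} -> R) :
  \sum_(x : 'I_c) \sum_(row : {ffun 'I_K -> 'I_2}) (dec K c x0 row == x)%:R * F row
  = \sum_row F row.
Proof.
rewrite exchange_big; apply: eq_bigr => row _.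
rewrite (bigD1 (dec K c x0 row)) //= eqxx mul1r big1 ?addr0 // => y /negbTE.
by rewrite eq_sym => ->; rewrite mul0r.
Qed.
Set Implicit Arguments. Unset Strict Implicit.

Definition remm (R : realType) c (p : 'I_c -> R) (j : nat) : R :=
  1 - \sum_(y : 'I_c | (y < j)%N) p y.
Definition pn (R : realType) c (p : 'I_c -> R) (j : nat) : R :=
  \sum_(y : 'I_c | val y == j) p y.
Definition tt (R : realType) c (p : 'I_c -> R) (j : nat) : R :=
  if (j < c.-1)%N then pn p j / remm p j else 2^-1.

Lemma pn_ord (R : realType) c (p : 'I_c -> R) (x : 'I_c) : pn p x = p x.
Proof.
rewrite /pn (eq_bigl (fun y => y == x)) ?big_pred1_eq // => y /=.
Qed.

Lemma remm_ge (R : realType) c (p : 'I_c -> R) (sum1 : \sum_y p y = 1) j :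
  remm p j = \sum_(y : 'I_c | (j <= y)%N) p y.
Proof.
rewrite /remm -sum1 (bigID (fun y : 'I_c => (y < j)%N)) /=.
by rewrite addrC addrK; apply: eq_bigl => y; rewrite -leqNgt.
Qed.

Lemma remm_S (R : realType) c (p : 'I_c -> R) j :
  remm p j.+1 = remm p j - pn p j.
Proof.
rewrite /remm /pn (bigID (fun y : 'I_c => (y < j)%N)) /=.
rewrite opprD addrA; congr (_ - _ - _).
  by apply: eq_bigl => y; rewrite ltnS andb_idl // => /ltnW.
by apply: eq_bigl => y; rewrite ltnS -leqNgt -eqn_leq.
Qed.

Lemma remm_gt0 (R : realType) c (p : 'I_c -> R) (sum1 : \sum_y p y = 1)
  (pos : forall x, 0 < p x) (hc : (0 < c)%N) m : (m <= c.-1)%N -> 0 < remm p m.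
Proof.
move=> hm; rewrite remm_ge //.
have cc : (c.-1 < c)%N by rewrite prednK.
rewrite (bigD1 (Ordinal cc)) //=.
apply: ltr_pwDl; first exact: pos.
by apply: sumr_ge0 => y _; apply: ltW.
Qed.

Lemma tt_bounds (R : realType) c (p : 'I_c -> R) (sum1 : \sum_y p y = 1)
  (pos : forall x, 0 < p x) (hc : (0 < c)%N) j : 0 < tt p j < 1.
Proof.
rewrite /tt; case: ifP => hj; last first.
  by rewrite invr_gt0 ltr0n /= invf_lt1 // ltr1n.
have jc : (j < c)%N by apply: (leq_trans hj); rewrite leq_pred.
have hpn : pn p j = p (Ordinal jc) by rewrite -pn_ord.
have r0 := remm_gt0 sum1 pos hc (ltnW hj).
have r1 := remm_gt0 sum1 pos hc hj.
rewrite remm_S in r1.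
have p0 := pos (Ordinal jc).
apply/andP; split; first by apply: divr_gt0; rewrite ?hpn.
by rewrite ltr_pdivrMr // mul1r -subr_gt0.
Qed.

Lemma prod_tt (R : realType) c (p : 'I_c -> R) (sum1 : \sum_y p y = 1)
  (pos : forall x, 0 < p x) (hc : (0 < c)%N) m : (m <= c.-1)%N ->
  \prod_(0 <= j < m) (1 - tt p j) = remm p m.
Proof.
elim: m => [_|m IH hm].
  by rewrite big_nil /remm big_pred0 ?subr0 // => y; rewrite ltn0.
rewrite big_nat_recr //= IH ?(ltnW hm) // remm_S /tt hm.
have r0 := remm_gt0 sum1 pos hc (ltnW hm).
by field; rewrite gt_eqF.
Qed.

Lemma stick_prod (R : realType) K c (p : 'I_c -> R) (sum1 : \sum_y p y = 1)
  (pos : forall x, 0 < p x) (hc : (0 < c)%N) (hcK : (c <= K)%N) (x : 'I_c) :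
  \prod_(j : 'I_K) \sum_(b : 'I_2) (allowed c x j b)%:R *
      (if val b == 1%N then tt p j else 1 - tt p j) = p x.
Proof.
pose G (j : nat) : R := if (j < x)%N then 1 - tt p j
   else if (j == x) && (x < c.-1)%N then tt p j else 1.
have -> : \prod_(j : 'I_K) \sum_(b : 'I_2) (allowed c x j b)%:R *
      (if val b == 1%N then tt p j else 1 - tt p j) = \prod_(j < K) G j.
  apply: eq_bigr => j _; rewrite !big_ord_recl big_ord0 /= /allowed /G.
  case: (j < x)%N => /=; first by rewrite mul1r mul0r !addr0.
  case: ((j == x :> nat) && _) => /=; first by rewrite mul0r mul1r add0r addr0.
  by rewrite !mul1r addr0 subrK.
have xK : (x <= K)%N by apply: ltnW; apply: (leq_trans (ltn_ord x)).
have xc : (x <= c.-1)%N by rewrite -ltnS prednK.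
rewrite -(big_mkord xpredT G) (@big_cat_nat _ _ _ x 0 K _ _ (leq0n x) xK) /=.
rewrite (eq_big_nat _ _ (F2 := fun j => 1 - tt p j)); last first.
  by move=> j /andP[_ jx]; rewrite /G jx.
rewrite prod_tt //.
rewrite big_ltn; last by apply: (leq_trans (ltn_ord x)).
rewrite big_nat_cond big1; last first.
  by move=> j /andP[/andP[xj _] _]; rewrite /G ltnNge (ltnW xj) /= gtn_eqF.
rewrite mulr1 /G ltnn eqxx /=.
case: ifP => xc1.
  rewrite /tt xc1 pn_ord.
  have r0 := remm_gt0 sum1 pos hc xc.
  by field; rewrite gt_eqF.
rewrite mulr1 remm_ge // (bigD1 x) //= big1 ?addr0 // => y /andP[hy yx].
exfalso; move: yx; apply/negP; rewrite negbK; apply/eqP/val_inj/eqP.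
rewrite eqn_leq hy andbT.
have : (x == c.-1 :> nat) by rewrite eqn_leq xc leqNgt xc1.
move=> /eqP hx; rewrite /= hx -ltnS prednK //.
Qed.

Lemma ind_pos (R : realType) K c x0 (hcK : (c <= K)%N) (x : 'I_c)
   (w : 'I_K -> 'I_2 -> R) (wpos : forall j b, 0 < w j b) :
  0 < \sum_(row : {ffun 'I_K -> 'I_2}) (dec K c x0 row == x)%:R * \prod_j w j (row j).
Proof.
pose row0 : {ffun 'I_K -> 'I_2} :=
  [ffun j : 'I_K => if (j < x)%N then ord0 else Ordinal (isT : (1 < 2)%N)].
have h0 : dec K c x0 row0 == x.
  rewrite dec_spec //; apply/forallP => j; rewrite /allowed ffunE.
  by case: (j < x)%N => //=; case: (_ && _).
rewrite (bigD1 row0) //= h0 mul1r; apply: ltr_pwDl.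
  by apply: prodr_gt0 => j _.
apply: sumr_ge0 => row _; apply: mulr_ge0; first by rewrite ler0n.
by apply: prodr_ge0 => j _; apply: ltW.
Qed.

Unset Implicit Arguments. Set Strict Implicit.


Definition KK (S : fcs) : nat := \big[maxn/0%N]_(i < nlat S) lcard S i.
Definition TT (S : fcs) : finType := ('I_(nlat S) * 'I_(KK S))%type.
Definition NN (S : fcs) : nat := #|TT S|.
Definition L' (S : fcs) := {dffun forall i : 'I_(NN S), 'I_2}.
Definition Rw (S : fcs) := {ffun 'I_(nlat S) -> {ffun 'I_(KK S) -> 'I_2}}.

Lemma cK (S : fcs) i : (lcard S i <= KK S)%N.
Proof. exact: leq_bigmax. Qed.

Definition dx0 (S : fcs) i : 'I_(lcard S i) := Ordinal (ltnW (lcard_ge2 S i)).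

Definition DECr (S : fcs) (r : Rw S) : assign S :=
  finfun (fun i => dec (KK S) (lcard S i) (dx0 S i) (r i)).

Definition rowof (S : fcs) (l : L' S) : Rw S :=
  [ffun i => [ffun j => l (enum_rank ((i, j) : TT S))]].

Definition DEC (S : fcs) (l : L' S) : assign S := DECr S (rowof S l).

Lemma DEC_local (S : fcs) (P : 'I_(nlat S) -> bool) (l l' : L' S) :
  (forall i', P (enum_val i').1 -> l i' = l' i') ->
  forall i, P i -> DEC S l i = DEC S l' i.
Proof.
move=> H i Pi; rewrite /DEC /DECr !ffunE; congr dec.
apply/ffunP => j; rewrite !ffunE; apply: H; by rewrite enum_rankK.
Qed.

Definition S2 (S : fcs) : fcs.
refine (@FCS (NN S) (fun _ => 2%N) (fun _ => leqnn 2) (edge S)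
  (fun i' => paA S (enum_val (i' : 'I_#|TT S|)).1)
  (fun i' => paB S (enum_val (i' : 'I_#|TT S|)).1)
  (fun l b => fA S (DEC S l) b) (fun l a => fB S (DEC S l) a) _ _ _ _).
- move=> l l' b H; apply: fA_local => i; exact: (DEC_local S (paA S) l l' H i).
- move=> l l' a H; apply: fB_local => i; exact: (DEC_local S (paB S) l l' H i).
- move=> h l b b'; exact: fA_obs.
- move=> h l a a'; exact: fB_obs.
Defined.

Lemma obs_S2 (S : fcs) (l : assign (S2 S)) : obs (S2 S) l = obs S (DEC S l).
Proof. by []. Qed.

Definition ind (R : realType) (S : fcs) (q : forall i : 'I_(NN S), 'I_2 -> R)
  (i : 'I_(nlat S)) (x : 'I_(lcard S i)) : R :=
  \sum_(row : {ffun 'I_(KK S) -> 'I_2}) (dec (KK S) (lcard S i) (dx0 S i) row == x)%:R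
     * \prod_(j < KK S) q (enum_rank ((i, j) : TT S)) (row j).

Lemma joint_S2 (R : realType) (S : fcs) (q : forall i : 'I_(NN S), 'I_2 -> R) a b :
  joint R (S2 S) q a b = joint R S (ind R S q) a b.
Proof.
rewrite /joint.
pose G (l : assign S) : R := (obs S l == (a, b))%:R.
pose W (r : Rw S) : R := \prod_i \prod_(j < KK S) q (enum_rank ((i, j) : TT S)) (r i j).
have -> : \sum_(l : assign S) (\prod_(i < nlat S) ind R S q i (l i)) * (obs S l == (a, b))%:R
   = \sum_(r : Rw S) W r * G (DECr S r).
  under eq_bigr => l _ do rewrite /ind bigA_distr_bigA big_distrl /=.
  rewrite exchange_big /=; apply: eq_bigr => r _.
  rewrite (bigD1 (DECr S r)) //= [X in _ + X]big1 ?addr0; last first.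
    move=> l /negbTE hl; rewrite big_split /=.
    have [i hi] : exists i, dec (KK S) (lcard S i) (dx0 S i) (r i) != l i.
      apply/existsP; rewrite -negb_forall; apply/negP => /forallP H.
      move/negP: hl; apply; apply/eqP/ffunP => i; rewrite /DECr ffunE.
      by apply/esym/eqP; exact: H.
    by rewrite (bigD1 i) //= (negbTE hi) !mul0r.
  rewrite big_split /= [X in X * _ * _]big1 ?mul1r // => i _.
  by rewrite /DECr ffunE eqxx.
pose h (r : Rw S) : L' S := finfun (fun i' : 'I_(NN S) => r (enum_val i').1 (enum_val i').2).
have hK : cancel h (rowof S).
  move=> r; apply/ffunP => i; apply/ffunP => j; rewrite !ffunE enum_rankK //.
have hK' : cancel (rowof S) h.
  move=> l; apply/ffunP => i'; rewrite !ffunE -surjective_pairing enum_valK //.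
rewrite (reindex h); last by exists (rowof S) => x _; [apply: hK|apply: hK'].
apply: eq_bigr => r _.
rewrite obs_S2 /DEC hK; congr (_ * _).
rewrite /W pair_bigA /= (reindex (@enum_val (TT S) predT)); last first.
  by exists enum_rank => x _; [apply: enum_valK|apply: enum_rankK].
apply: eq_bigr => i' _; rewrite ffunE -surjective_pairing enum_valK //.
Qed.

Lemma joint_ext (R : realType) (S : fcs) (p1 p2 : forall i : 'I_(nlat S), 'I_(lcard S i) -> R) a b :
  (forall i x, p1 i x = p2 i x) -> joint R S p1 a b = joint R S p2 a b.
Proof.
move=> H; rewrite /joint; apply: eq_bigr => l _; congr (_ * _).
by apply: eq_bigr => i _; rewrite H.
Qed.

Lemma other (c : nat) (hc : (2 <= c)%N) (x : 'I_c) : exists y : 'I_c, y != x.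
Proof.
have h1 : (1 < c)%N by []. have h0 : (0 < c)%N by apply: ltnW.
case: (eqVneq (val x) 0%N) => hx.
  by exists (Ordinal h1); apply/eqP => /(congr1 val) /=; rewrite hx.
by exists (Ordinal h0); apply/eqP => /(congr1 val) /= /esym; apply/eqP.
Qed.

Theorem theorem1 (R : realType) (S : fcs) :
  exists S' : fcs, (forall i, lcard S' i = 2%N) /\ obs_equiv R S S'.
Proof.
exists (S2 S); split; first by [].
move=> P; split.
- case=> p [[pb ps] HP].
  have pos i x : 0 < p i x by case/andP: (pb i x).
  have hc i : (0 < lcard S i)%N by apply: ltnW (lcard_ge2 S i).
  pose q : forall i : 'I_(NN S), 'I_2 -> R := fun i' b =>
    if val b == 1%N then tt (p (enum_val i').1) (enum_val i').2
    else 1 - tt (p (enum_val i').1) (enum_val i').2.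
  exists q; split; first split.
  + move=> i' x; have := tt_bounds (ps (enum_val i').1) (pos _) (hc _) (enum_val i').2.
    rewrite /q; case: (_ == _) => // /andP[h0 h1].
    by rewrite subr_gt0 h1 /= ltrBlDr ltrDl h0.
  + move=> i'; rewrite /q !big_ord_recl big_ord0 /=.
    by rewrite addr0 subrK.
  + move=> a b; rewrite HP joint_S2; apply: joint_ext => i x.
    rewrite /ind (sum_dec_fact R (KK S) (lcard S i) (dx0 S i) (cK S i) x
       (fun j bb => q (enum_rank ((i, j) : TT S)) bb)).
    rewrite -[LHS](stick_prod (ps i) (pos i) (hc i) (cK S i)).
    apply: eq_bigr => j _; apply: eq_bigr => bb _; rewrite /q enum_rankK //.
- case=> q [[qb qs] HP].
  have qpos i b : 0 < q i b by case/andP: (qb i b).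
  have s1 i : \sum_y ind R S q i y = 1.
    rewrite /ind sum_dec_all (sum_rows_one R (KK S)
       (fun j bb => q (enum_rank ((i, j) : TT S)) bb)) // => j; exact: qs.
  have ipos i x : 0 < ind R S q i x.
    exact: (@ind_pos R (KK S) (lcard S i) (dx0 S i) (cK S i) x
       (fun j bb => q (enum_rank ((i, j) : TT S)) bb) (fun j bb => qpos _ bb)).
  exists (ind R S q); split; first split.
  + move=> i x; rewrite ipos /= -(s1 i) (bigD1 x) //= ltrDl.
    have [y hy] := other _ (lcard_ge2 S i) x.
    rewrite (bigD1 y) //=; apply: ltr_pwDl => //.
    by apply: sumr_ge0 => z _; apply: ltW.
  + exact: s1.
  + by move=> a b; rewrite HP joint_S2.
Qed.
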